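(* Let $\mathfrak{q}$ be a $\mathrm{Lie}$-nilpotent Leibniz algebra of class $k$ and let $0\to\mathfrak{n}\to\mathfrak{g}\xrightarrow{\pi}\mathfrak{q}\to0$ be a $\mathrm{Lie}$-central extension. Fix a free presentation $0\to\mathfrak{r}\to\mathfrak{f}\xrightarrow{\rho}\mathfrak{g}\to0$, put $\mathfrak{s}=\ker(\pi\circ\rho)$, so that $\mathcal{M}^{\mathrm{Lie}}(\mathfrak{q})=\frac{\mathfrak{s}\cap[\mathfrak{f},\mathfrak{f}]_{\mathrm{Lie}}}{[\mathfrak{f},\mathfrak{s}]_{\mathrm{Lie}}}$, and let $\theta:\mathcal{M}^{\mathrm{Lie}}(\mathfrak{q})\to\mathfrak{n}$ be $\theta(x+[\mathfrak{f},\mathfrak{s}]_{\mathrm{Lie}})=\rho(x)$. Let $\tau:\mathcal{M}^{\mathrm{Lie}}(\mathfrak{q})\to\mathcal{M}^{\mathrm{Lie}}(\mathfrak{q}/\mathfrak{q}^{[k]})$ be the map induced by the canonical projection $\mathfrak{q}\twoheadrightarrow\mathfrak{q}/\mathfrak{q}^{[k]}$ (concretely, with $\mathfrak{t}=\ker(\mathfrak{f}\to\mathfrak{q}/\mathfrak{q}^{[k]})$, $\tau(x+[\mathfrak{f},\mathfrak{s}]_{\mathrm{Lie}})=x+[\mathfrak{f},\mathfrak{t}]_{\mathrm{Lie}}$). Then $\mathfrak{g}$ is $\mathrm{Lie}$-nilpotent of class $k$ if and only if $\theta$ vanishes on $\ker(\tau)$.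
   Context: Fix a field $\mathbb{K}$ with $\frac12\in\mathbb{K}$. A Leibniz algebra is a $\mathbb{K}$-vector space with a bilinear bracket satisfying $[x,[y,z]]=[[x,y],z]-[[x,z],y]$. For two-sided ideals $\mathfrak{m},\mathfrak{n}$, $[\mathfrak{m},\mathfrak{n}]_{\mathrm{Lie}}$ is the subspace spanned by all $[m,n]+[n,m]$. $Z_{\mathrm{Lie}}(\mathfrak{g})=\{z:[q,z]+[z,q]=0\ \forall q\}$; a surjection $\mathfrak{g}\to\mathfrak{q}$ is a $\mathrm{Lie}$-central extension if its kernel lies in $Z_{\mathrm{Lie}}(\mathfrak{g})$. Lower $\mathrm{Lie}$-central series: $\mathfrak{h}^{[1]}=\mathfrak{h}$, $\mathfrak{h}^{[i]}=[\mathfrak{h}^{[i-1]},\mathfrak{h}]_{\mathrm{Lie}}$; class $k$ means $\mathfrak{h}^{[k+1]}=0\ne\mathfrak{h}^{[k]}$. For a free presentation $0\to\mathfrak{r}\to\mathfrak{f}\to\mathfrak{g}\to0$ ($\mathfrak{f}$ free Leibniz), $\mathcal{M}^{\mathrm{Lie}}(\mathfrak{g})=\frac{\mathfrak{r}\cap[\mathfrak{f},\mathfrak{f}]_{\mathrm{Lie}}}{[\mathfrak{f},\mathfrak{r}]_{\mathrm{Lie}}}$, independent of the presentation up to isomorphism. *)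

(* Defs.v *)
From HB Require Import structures.
From mathcomp Require Import all_boot all_order all_algebra.
Set Implicit Arguments. Unset Strict Implicit. Unset Printing Implicit Defensive.
Import GRing.Theory.
Local Open Scope ring_scope.

(* Subspaces/ideals are represented as predicates (V -> Prop), since the
   algebras (e.g. free ones) are in general infinite dimensional. *)

Section Leibniz.
Variable K : fieldType.

Definition leibniz (V : lmodType K) (br : V -> V -> V) : Prop :=
  [/\ (forall (a : K) (x y z : V), br (a *: x + y) z = a *: br x z + br y z),
      (forall (a : K) (x y z : V), br z (a *: x + y) = a *: br z x + br z y)
    & (forall x y z : V, br x (br y z) = br (br x y) z - br (br x z) y)].

Definition leibniz_hom (V W : lmodType K) (brV : V -> V -> V)
    (brW : W -> W -> W) (f : V -> W) : Prop :=
  (forall (a : K) (x y : V), f (a *: x + y) = a *: f x + f y) /\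
  (forall x y : V, f (brV x y) = brW (f x) (f y)).

Definition surj (A B : Type) (f : A -> B) : Prop := forall b, exists a, f a = b.

Definition free_leibniz (F : lmodType K) (brF : F -> F -> F) : Prop :=
  exists (X : Type) (i : X -> F),
    forall (H : lmodType K) (brH : H -> H -> H), leibniz brH ->
    forall phi : X -> H,
      exists psi : F -> H,
        (leibniz_hom brF brH psi /\ forall x, psi (i x) = phi x) /\
        (forall psi' : F -> H,
            leibniz_hom brF brH psi' /\ (forall x, psi' (i x) = phi x) ->
            forall v, psi' v = psi v).

Section Span.
Variable V : lmodType K.

Definition subspace (P : V -> Prop) : Prop :=
  P 0 /\ forall (a : K) (x y : V), P x -> P y -> P (a *: x + y).

Definition span (S : V -> Prop) : V -> Prop :=
  fun v => forall P, subspace P -> (forall x, S x -> P x) -> P v.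

Variable br : V -> V -> V.

Definition lie_br (M N : V -> Prop) : V -> Prop :=
  span (fun v => exists m n, [/\ M m, N n & v = br m n + br n m]).

Definition setT_ : V -> Prop := fun _ => True.

Definition lie_center (z : V) : Prop := forall q, br q z + br z q = 0.

(* lcs i = h^[i+1] *)
Fixpoint lcs (i : nat) : V -> Prop :=
  match i with
  | 0 => setT_
  | i'.+1 => lie_br (lcs i') setT_
  end.

(* h^[i] for i >= 1 (lower Lie-central series) *)
Definition lower_lie (i : nat) : V -> Prop := lcs i.-1.

Definition lie_nilpotent_class (k : nat) : Prop :=
  (forall x, lower_lie k.+1 x -> x = 0) /\ (exists x, lower_lie k x /\ x <> 0).

End Span.
End Leibniz.

(* Main.v *)
Require Import Defs.
From HB Require Import structures.
From mathcomp Require Import all_boot all_order all_algebra.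
Import GRing.Theory.
Local Open Scope ring_scope.

Set Implicit Arguments. Unset Strict Implicit.
Section Aux.
Variable K : fieldType.

Lemma span_sub (V : lmodType K) (S : V -> Prop) x : S x -> Defs.span S x.
Proof. by move=> Sx P _ HS; apply: HS. Qed.

Lemma span_subspace (V : lmodType K) (S : V -> Prop) : subspace (Defs.span S).
Proof.
split; first by move=> P [H0 _] _.
move=> a x y Hx Hy P HP HS; apply: HP.2; [exact: Hx|exact: Hy].
Qed.

Lemma lie_br_mono (V : lmodType K) (br : V -> V -> V) (M M' N N' : V -> Prop) :
  (forall x, M x -> M' x) -> (forall x, N x -> N' x) ->
  forall x, lie_br br M N x -> lie_br br M' N' x.
Proof.
move=> HM HN x Hx; apply: Hx; first exact: span_subspace.
move=> v [m [n [Hm Hn ->]]]; apply: span_sub; exists m, n; split; auto.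
Qed.

Lemma lcs_subspace (V : lmodType K) (br : V -> V -> V) i : subspace (lcs br i).
Proof.
case: i => [|i] /=; last exact: span_subspace.
by split.
Qed.

Lemma hom0 (V W : lmodType K) (f : V -> W) :
  (forall (a : K) (x y : V), f (a *: x + y) = a *: f x + f y) -> f 0 = 0.
Proof.
move=> hf; have h := hf 1 0 0; rewrite !scale1r addr0 in h.
have -> : f 0 = f 0 + f 0 - f 0 by rewrite addrK.
by rewrite -h subrr.
Qed.

Lemma homD (V W : lmodType K) (f : V -> W) :
  (forall (a : K) (x y : V), f (a *: x + y) = a *: f x + f y) ->
  forall x y, f (x + y) = f x + f y.
Proof. by move=> hf x y; have := hf 1 x y; rewrite !scale1r. Qed.

Lemma homB (V W : lmodType K) (f : V -> W) :
  (forall (a : K) (x y : V), f (a *: x + y) = a *: f x + f y) ->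
  forall x y, f (- x + y) = - f x + f y.
Proof. by move=> hf x y; have := hf (-1) x y; rewrite !scaleN1r. Qed.

Lemma brDl (V : lmodType K) (br : V -> V -> V) : leibniz br ->
  forall x y z, br (x + y) z = br x z + br y z.
Proof. by case=> h _ _ x y z; have := h 1 x y z; rewrite !scale1r. Qed.

Lemma brDr (V : lmodType K) (br : V -> V -> V) : leibniz br ->
  forall x y z, br z (x + y) = br z x + br z y.
Proof. by case=> _ h _ x y z; have := h 1 x y z; rewrite !scale1r. Qed.

Lemma lcs_hom (V W : lmodType K) (brV : V -> V -> V) (brW : W -> W -> W)
  (f : V -> W) : leibniz_hom brV brW f -> forall i x,
  lcs brV i x -> lcs brW i (f x).
Proof.
move=> [hl hb]; elim=> [//|i IH] x /= Hx.
apply: (Hx (fun v => lie_br brW (lcs brW i) (@setT_ K W) (f v))).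
- split; first by rewrite (hom0 (f:=f) hl); exact: (span_subspace _).1.
  move=> a u v Hu Hv; rewrite hl; exact: (span_subspace _).2.
- move=> v [m [n [Hm _ ->]]]; apply: span_sub; exists (f m), (f n); split => //.
  + exact: IH.
  + by rewrite (homD (f:=f) hl) !hb.
Qed.

Lemma lcs_surj (V W : lmodType K) (brV : V -> V -> V) (brW : W -> W -> W)
  (f : V -> W) : leibniz_hom brV brW f -> surj f -> forall i y,
  lcs brW i y -> exists x, lcs brV i x /\ f x = y.
Proof.
move=> [hl hb] sf; elim=> [|i IH] y /= Hy; first by have [x <-] := sf y; exists x.
apply: (Hy (fun w => exists x, lie_br brV (lcs brV i) (@setT_ K V) x /\ f x = w)).
- split; first by exists 0; split; [exact: (span_subspace _).1|exact: (hom0 (f:=f))].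
  move=> a u v [x [Hx <-]] [x' [Hx' <-]]; exists (a *: x + x'); split => //.
  exact: (span_subspace _).2.
- move=> v [m [n [Hm _ ->]]].
  have [m' [Hm' <-]] := IH m Hm; have [n' <-] := sf n.
  exists (brV m' n' + brV n' m'); split; last by rewrite (homD (f:=f) hl) !hb.
  by apply: span_sub; exists m', n'.
Qed.

End Aux.

Theorem mainTheorem9 (K : fieldType) (two_unit : (2 : K) != 0)
  (Q : lmodType K) (brQ : Q -> Q -> Q) (LQ : leibniz brQ)
  (G : lmodType K) (brG : G -> G -> G) (LG : leibniz brG)
  (F : lmodType K) (brF : F -> F -> F) (LF : leibniz brF)
  (freeF : free_leibniz brF)
  (pi : G -> Q) (hom_pi : leibniz_hom brG brQ pi) (surj_pi : surj pi)
  (central : forall x : G, pi x = 0 -> lie_center brG x)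
  (rho : F -> G) (hom_rho : leibniz_hom brF brG rho) (surj_rho : surj rho)
  (k : nat) (classQ : lie_nilpotent_class brQ k) :
  let s : F -> Prop := fun x => pi (rho x) = 0 in
  let t : F -> Prop := fun x => lower_lie brQ k (pi (rho x)) in
  lie_nilpotent_class brG k <->
  (forall x : F, s x -> lie_br brF (@setT_ K F) (@setT_ K F) x ->
     lie_br brF (@setT_ K F) t x -> rho x = 0).
Proof.
move=> s t.
have [Q0 [q [Hq q0]]] := classQ.
have k0 : k != 0%N.
  apply/eqP=> k0; apply: q0; apply: Q0; by rewrite k0.
have [k' Ek] : exists k', k = k'.+1 by case: (k) k0 => // k' _; exists k'.
subst k.
have [hlr hbr] := hom_rho; have [hlp hbp] := hom_pi.
split.
- move=> [G0 _] x _ _ Hx.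
  apply: (Hx (fun v => rho v = 0)).
  + split; first exact: (hom0 (f:=rho) hlr).
    by move=> a u v Hu Hv; rewrite hlr Hu Hv scaler0 addr0.
  + move=> v [a [n [_ Hn ->]]].
    rewrite (homD (f:=rho) hlr) !hbr.
    have [b' [Hb' Eb']] := lcs_surj hom_pi surj_pi Hn.
    set z := - b' + rho n.
    have Ez : rho n = b' + z by rewrite /z addrA subrr add0r.
    have pz : pi z = 0 by rewrite /z (homB (f:=pi) hlp) Eb' addNr.
    rewrite Ez (brDl (br:=brG) LG) (brDr (br:=brG) LG) addrACA.
    have -> : brG (rho a) z + brG z (rho a) = 0 by exact: central.
    rewrite addr0; apply: G0.
    rewrite /lower_lie /=; rewrite /lower_lie /= in Hb'.
    by rewrite addrC; apply: span_sub; exists b', (rho a).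
- move=> H.
  have G0 : forall y, lower_lie brG k'.+2 y -> y = 0.
    move=> y Hy; rewrite /lower_lie in Hy.
    have [x [Hx <-]] := lcs_surj hom_rho surj_rho Hy.
    apply: H.
    + rewrite /s; apply: Q0; rewrite /lower_lie /=.
      exact: (lcs_hom hom_pi (lcs_hom hom_rho Hx)).
    + move: Hx => /=; by apply: lie_br_mono.
    + move: Hx => /= Hx.
      apply: Hx; first exact: span_subspace.
      move=> v [m [n [Hm _ ->]]]; apply: span_sub; exists n, m; split => //.
      * rewrite /t /lower_lie /=.
        exact: (lcs_hom hom_pi (lcs_hom hom_rho Hm)).
      * by rewrite addrC.
  split => //.
  have [y [Hy Ey]] := lcs_surj hom_pi surj_pi Hq.
  exists y; split => // y0; apply: q0; rewrite -Ey y0; exact: (hom0 (f:=pi) hlp).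
Qed.
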